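(* Let $i\geq1$ and let $\tau$ be an SSRCT of shape $\alpha$ such that the partition $\widetilde\alpha$ has an addable node in column $i+1$. Then $\phi_{i+1}(\tau)$ has shape $\mathfrak{d}_i(\alpha)$.
   Context: Compositions (positive parts) are drawn as reverse composition diagrams: row $r$ from the top has $\alpha_r$ left-justified boxes; $\widetilde\alpha$ is the partition obtained by sorting the parts of $\alpha$ decreasingly; an addable node of a partition is a position whose addition gives a partition. An SSRCT of shape $\alpha$ is a filling by positive integers with rows weakly decreasing left to right, first column strictly increasing top to bottom, and: for rows $r<s$ and column $c$ with $(s,c+1)\in\alpha$, if $(r,c)\in\alpha$ and $\tau(r,c)\geq\tau(s,c+1)$ then $(r,c+1)\in\alpha$ and $\tau(r,c+1)>\tau(s,c+1)$. $\mathfrak{d}_i(\alpha)$ is obtained by subtracting $1$ from the rightmost part of $\alpha$ equal to $i$ and omitting a resulting $0$. $\phi_{i+1}$: set $\tau(r,c)=0$ outside $\alpha$; let $r_1$ be the largest index with $\alpha_{r_1}=i$, and for $j\geq2$ let $r_j$ be the largest $r<r_{j-1}$ with $\tau(r,i)>\tau(r_{j-1},i)\geq\tau(r,i+1)$, ending at $r_k$. $\phi_{i+1}(\tau)$ is obtained by placing, for $j=k,\ldots,2$, the original entry $\tau(r_{j-1},i)$ into box $(r_j,i)$ and deleting box $(r_1,i)$ (deleting the row if it becomes empty). *)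

(* Defs.v *)
From mathcomp Require Import all_boot.
Set Implicit Arguments. Unset Strict Implicit. Unset Printing Implicit Defensive.

(* Compositions are [seq nat] with positive parts; tableaux are [seq (seq nat)],
   row r (1-based, from the top) being [nth [::] t r.-1], its boxes read left to
   right.  Rows and columns are indexed from 1 as in the paper. *)

Definition is_composition (alpha : seq nat) : bool := all (fun a => 0 < a) alpha.

Definition inbox (alpha : seq nat) (r c : nat) : bool :=
  [&& 1 <= r, r <= size alpha, 1 <= c & c <= nth 0 alpha r.-1].

(* tau(r,c), with the convention tau(r,c) = 0 outside the diagram *)
Definition entry (t : seq (seq nat)) (r c : nat) : nat :=
  if (r == 0) || (c == 0) then 0 else nth 0 (nth [::] t r.-1) c.-1.

Definition SSRCT (t : seq (seq nat)) (alpha : seq nat) : Prop :=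
  is_composition alpha /\ [/\ shape t = alpha,
      (forall r c, inbox alpha r c -> 0 < entry t r c),
      (forall r c, 1 <= c -> inbox alpha r c.+1 -> entry t r c.+1 <= entry t r c),
      (forall r, 1 <= r -> r < size alpha -> entry t r 1 < entry t r.+1 1) &
      (forall r s c, 1 <= r -> r < s -> 1 <= c ->
         inbox alpha s c.+1 -> inbox alpha r c ->
         entry t s c.+1 <= entry t r c ->
         (inbox alpha r c.+1 /\ entry t s c.+1 < entry t r c.+1))].

Definition sort_partition (alpha : seq nat) : seq nat := sort geq alpha.

(* (k, c) is an addable node of the partition lam (k, c >= 1; parts beyond the
   length are 0): adding it yields a partition *)
Definition addable (lam : seq nat) (k c : nat) : bool :=
  [&& 1 <= k, 1 <= c, nth 0 lam k.-1 == c.-1 & ((k == 1) || (c <= nth 0 lam k.-2))].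

Definition has_addable_in_column (lam : seq nat) (c : nat) : Prop :=
  exists k, addable lam k c.

(* d_i(alpha): subtract 1 from the rightmost part equal to i, omitting a 0 *)
Fixpoint dfrak (i : nat) (s : seq nat) : seq nat :=
  match s with
  | [::] => [::]
  | a :: s' =>
      if i \in s' then a :: dfrak i s'
      else if a == i then (if a.-1 == 0 then s' else a.-1 :: s')
      else a :: s'
  end.

(* largest (1-based) index r with s_r = i, or 0 if there is none *)
Fixpoint lastpos (i : nat) (s : seq nat) : nat :=
  match s with
  | [::] => 0
  | a :: s' => let p := lastpos i s' in
               if p != 0 then p.+1 else if a == i then 1 else 0
  end.

Fixpoint search (t : seq (seq nat)) (i r0 n : nat) : option nat :=
  match n with
  | 0 => None
  | n'.+1 => if (entry t r0 i < entry t n'.+1 i) && (entry t n'.+1 i.+1 <= entry t r0 i)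
             then Some n'.+1 else search t i r0 n'
  end.

Definition next_row (t : seq (seq nat)) (i r : nat) : option nat := search t i r r.-1.

(* r_2, r_3, ..., r_k starting from r = r_1 (strictly decreasing, so fuel r suffices) *)
Fixpoint chain (t : seq (seq nat)) (i r fuel : nat) : seq nat :=
  match fuel with
  | 0 => [::]
  | f.+1 => match next_row t i r with
            | Some r' => r' :: chain t i r' f
            | None => [::]
            end
  end.

Definition set_entry (t : seq (seq nat)) (r c v : nat) : seq (seq nat) :=
  set_nth [::] t r.-1 (set_nth 0 (nth [::] t r.-1) c.-1 v).

Definition delete_box (t : seq (seq nat)) (r c : nat) : seq (seq nat) :=
  let row := nth [::] t r.-1 in
  let row' := take c.-1 row ++ drop c row in
  if row' == [::] then take r.-1 t ++ drop r t else set_nth [::] t r.-1 row'.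

Definition phi (m : nat) (t : seq (seq nat)) : seq (seq nat) :=
  let i := m.-1 in
  let r1 := lastpos i (shape t) in
  let rs := r1 :: chain t i r1 r1 in
  (* for each consecutive pair (r_{j-1}, r_j): put original tau(r_{j-1},i) in (r_j,i) *)
  let t' := foldr (fun p acc => set_entry acc p.2 i (entry t p.1 i)) t
                  (zip rs (behead rs)) in
  delete_box t' r1 i.

(* Main.v *)
Require Import Defs.
From mathcomp Require Import all_boot.

Lemma search_pos {t i r0 n x} : search t i r0 n = Some x -> 0 < entry t x i.
Proof.
elim: n => //= n IH.
case: ifP => [/andP [H _] [<-]|_ /IH //].
exact: leq_ltn_trans H.
Qed.

Lemma chain_pos t i r f : all (fun x => 0 < entry t x i) (chain t i r f).
Proof.
elim: f r => //= f IH r.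
rewrite /next_row; case E: (search _ _ _ _) => [x|] //=.
by rewrite (search_pos E) IH.
Qed.

Lemma all_zip2 (A B : Type) (P : B -> bool) (s : seq A) (u : seq B) :
  all P u -> all (fun p => P p.2) (zip s u).
Proof.
elim: s u => [|a s IH] [|b u] //= /andP [H1 H2].
by rewrite H1 IH.
Qed.

Lemma entry_pos t r c : 0 < entry t r c ->
  [/\ 0 < r, 0 < c, c.-1 < size (nth [::] t r.-1) & r.-1 < size t].
Proof.
rewrite /entry; case: r => // r; case: c => // c /= H.
have H1 : c < size (nth [::] t r).
  by rewrite ltnNge; apply/negP => /(nth_default 0) E; rewrite E in H.
split => //.
rewrite ltnNge; apply/negP => /(nth_default [::]) E; by rewrite E in H1.
Qed.

Lemma shape_set_nth (t : seq (seq nat)) k row :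
  k < size t -> size row = size (nth [::] t k) ->
  shape (set_nth [::] t k row) = shape t.
Proof.
elim: t k => [|a t IH] [|k] //= Hk Hs.
- by rewrite Hs.
- by rewrite IH.
Qed.

Lemma shape_set_entry t r c v : c.-1 < size (nth [::] t r.-1) -> r.-1 < size t ->
  shape (set_entry t r c v) = shape t.
Proof.
move=> Hrow Ht.
rewrite /set_entry shape_set_nth // size_set_nth.
by apply/maxn_idPr.
Qed.


Lemma lastpos0 i s : (lastpos i s != 0) = (i \in s).
Proof.
elim: s => //= a s IH.
rewrite in_cons -IH; case: (lastpos i s) => [|p] /=.
  by rewrite orbF (eq_sym i a); case: (a == i).
by rewrite orbT.
Qed.

Lemma delete_shape i (alpha : seq nat) (t : seq (seq nat)) :
  1 <= i -> i \in alpha -> shape t = alpha ->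
  shape (delete_box t (lastpos i alpha) i) = dfrak i alpha.
Proof.
move=> Hi; elim: alpha t => [|a s IH] // [|row t] //= Hin [Ha Hs].
case Hs': (i \in s).
- have := lastpos0 i s; rewrite Hs'; case E: (lastpos i s) => [|p] // _.
  have := IH t Hs' Hs; rewrite E /delete_box /= => <-.
  case: ifP => _ //=.
  all: rewrite ?Ha //.
- have Hai : a = i.
    by move: Hin; rewrite in_cons Hs' orbF => /eqP.
  have -> : lastpos i s = 0 by apply/eqP/negbFE; rewrite lastpos0 Hs'.
  rewrite Hai /delete_box !eqxx /=.
  have Hrow : drop i row = [::] by apply/eqP; rewrite -size_eq0 size_drop Ha Hai subnn.
  rewrite Hrow cats0 -size_eq0 size_take Ha Hai.
  rewrite Hai in Ha; clear Hai.
  case: i Hi Ha {Hrow IH Hin Hs'} => [|[|j]] // _ Ha /=; first by rewrite drop0.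
  by rewrite ltnSn /= size_take Ha ltnSn Hs.
Qed.

Theorem lemma6p22 (i : nat) (alpha : seq nat) (tau : seq (seq nat)) :
  1 <= i ->
  SSRCT tau alpha ->
  has_addable_in_column (sort_partition alpha) i.+1 ->
  shape (phi i.+1 tau) = dfrak i alpha.
Proof.
move=> Hi [_ [Hsh _ _ _ _]] [k /and4P [_ _ /eqP Hk _]].
have Hin : i \in alpha.
  have Hlt : k.-1 < size (sort_partition alpha).
    rewrite ltnNge; apply/negP => /(nth_default 0) E.
    by rewrite Hk /= in E; rewrite E in Hi.
  by rewrite -(mem_sort geq) -[i]/(i.+1.-1) -Hk mem_nth.
rewrite /phi /= Hsh.
apply: delete_shape => //.
set l := zip _ _.
have : all (fun p => 0 < entry tau p.2 i) l.
  exact: (@all_zip2 _ _ (fun x => 0 < entry tau x i) _ _ (chain_pos _ _ _ _)).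
elim: l => [|p l IH] /=; first by [].
case/andP => H1 H2.
have Hs := IH H2.
case/entry_pos: H1 => Hr Hc Hrow Ht.
set t' := foldr _ _ _ in Hs *.
rewrite -Hsh in Hs *.
have Hsz : size t' = size tau by have := congr1 size Hs; rewrite /shape !size_map.
have Hrs : size (nth [::] t' p.2.-1) = size (nth [::] tau p.2.-1).
  by rewrite -!(nth_map [::] 0 size) ?Hsz //; have := Hs; rewrite /shape => ->.
by rewrite shape_set_entry ?Hrs ?Hsz.

Qed.
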